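(* Let $G$ and $H$ be word-representable graphs with representation numbers $k_1$ and $k_2$, respectively. Then $G\,\square\,H$ is $(k_1 + k_2 + \min\{|G|,|H|\})$-representable.
   Context: All graphs are simple and undirected; $|G|$ denotes the number of vertices of $G$. Letters $x,y$ alternate in a word $w$ if deleting all other letters from $w$ yields $xyxy\ldots$ or $yxyx\ldots$ (of either parity). A word $w$ over $V(G)$ represents $G$ if every vertex occurs in $w$ and for all distinct $x,y$, $xy\in E(G)$ iff $x,y$ alternate in $w$. A word is $k$-uniform if each of its letters occurs exactly $k$ times; $G$ is $k$-representable if it is represented by some $k$-uniform word; the representation number of a word-representable graph $G$ is the least $k$ such that $G$ is $k$-representable. The Cartesian product $G\,\square\,H$ has vertex set $V(G)\times V(H)$, with $(u,v)$ adjacent to $(u',v')$ iff either $u=u'$ and $vv'\in E(H)$, or $v=v'$ and $uu'\in E(G)$. *)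

(* Defs.v *)
From mathcomp Require Import all_boot.
Set Implicit Arguments. Unset Strict Implicit. Unset Printing Implicit Defensive.

Definition alt_seq (T : Type) (x y : T) (n : nat) : seq T :=
  mkseq (fun i => if odd i then y else x) n.

Definition alternate (T : eqType) (w : seq T) (x y : T) : bool :=
  let s := filter (fun z => (z == x) || (z == y)) w in
  (s == alt_seq x y (size s)) || (s == alt_seq y x (size s)).

Definition represents (T : finType) (E : rel T) (w : seq T) : Prop :=
  (forall x : T, x \in w) /\
  (forall x y : T, x != y -> (E x y <-> alternate w x y)).

Definition uniform (T : eqType) (k : nat) (w : seq T) : Prop :=
  forall x, x \in w -> count_mem x w = k.

Definition k_representable (T : finType) (E : rel T) (k : nat) : Prop :=
  exists w : seq T, uniform k w /\ represents E w.

Definition word_representable (T : finType) (E : rel T) : Prop :=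
  exists w : seq T, represents E w.

Definition representation_number (T : finType) (E : rel T) (k : nat) : Prop :=
  k_representable E k /\ forall k', k_representable E k' -> k <= k'.

Definition cart_rel (T1 T2 : finType) (E1 : rel T1) (E2 : rel T2) : rel (T1 * T2) :=
  fun p q => ((p.1 == q.1) && E2 p.2 q.2) || ((p.2 == q.2) && E1 p.1 q.1).

(* Main.v *)
Require Import Defs.
From mathcomp Require Import all_boot zify.
Set Implicit Arguments. Unset Strict Implicit. Unset Printing Implicit Defensive.



Definition neqr {T : eqType} : rel T := fun x y => x != y.
Definition altb {T : eqType} (s : seq T) := if s is a :: s' then path neqr a s' else true.

Lemma alt_seqS (T : eqType) (x : T) (y : T) n : alt_seq x y n.+1 = x :: alt_seq y x n.
Proof.
rewrite /alt_seq /mkseq /=.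
have -> : iota 1 n = map (addn 1) (iota 0 n) by rewrite -iotaDl.
rewrite -map_comp; congr (_ :: _).
by apply: eq_map => i /=; case: (odd i).
Qed.

Lemma path_alt (T : eqType) (a : T) (b : T) (s : seq T) : a != b -> all (pred2 a b) s ->
  path neqr a s = (s == alt_seq b a (size s)).
Proof.
elim: s a b => [|z s IH] a b ab //= /andP [zab sab].
rewrite alt_seqS eqseq_cons.
have [->|za] := eqVneq z a.
  by rewrite /neqr eqxx /= (negbTE ab).
have zb : z == b by move: zab => /orP [/eqP zz|//]; rewrite zz eqxx in za.
rewrite /neqr eq_sym za zb /= (eqP zb).
apply: IH; first by rewrite eq_sym.
by apply: sub_all sab => t /=; rewrite orbC.
Qed.

Lemma alternateE (T : eqType) (w : seq T) (x : T) (y : T) : x != y -> alternate w x y = altb (filter (pred2 x y) w).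
Proof.
move=> xy; rewrite /alternate.
have : all (pred2 x y) (filter (pred2 x y) w) by apply/allP => z; rewrite mem_filter => /andP [].
rewrite (_ : filter _ w = filter (pred2 x y) w) //.
case: (filter (pred2 x y) w) => [|z s] //= /andP [zxy sxy].
rewrite !alt_seqS !eqseq_cons.
have [->|zx] := eqVneq z x.
  by rewrite (negbTE xy) /= orbF (path_alt xy).
have zy : z == y by move: zxy => /orP [/eqP zz|//]; rewrite zz eqxx in zx.
rewrite zy /= (eqP zy) (@path_alt _ y x) //; first by rewrite eq_sym.
by apply: sub_all sxy => t /=; rewrite orbC.
Qed.

Definition pw {T : Type} (a b : T) k : seq T := flatten (nseq k [:: a; b]).

Lemma pwS (T : eqType) (a : T) (b : T) k : pw a b k.+1 = a :: b :: pw a b k.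
Proof. by []. Qed.

Lemma pwD (T : eqType) (a : T) (b : T) p q : pw a b (p + q) = pw a b p ++ pw a b q.
Proof. by rewrite /pw nseqD flatten_cat. Qed.

Lemma path_pw (T : eqType) (a : T) (b : T) k : a != b -> path neqr b (pw a b k).
Proof.
move=> ab; elim: k => [|k IH] //=.
by rewrite IH andbT /neqr eq_sym ab.
Qed.

Lemma altb_pw (T : eqType) (a : T) (b : T) k : a != b -> altb (pw a b k).
Proof. by move=> ab; case: k => [|k] //=; rewrite {1}/neqr ab path_pw. Qed.

Lemma altb_cat (T : eqType) (s : seq T) (t : seq T) : altb (s ++ t) -> altb s /\ altb t.
Proof.
case: s => [|a s] //= .
rewrite cat_path => /andP [-> ]; case: t => [|b t] //= /andP [_ ->] //.
Qed.

Lemma altb_cat_last (T : eqType) (a : T) (s : seq T) (t : seq T) : altb (s ++ a :: t) -> s != [::] -> last a s != a.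
Proof.
case: s => [|c s] //= ; rewrite cat_path => /andP [_] /= /andP [h _] _.
exact: h.
Qed.

Lemma altb_dup (T : eqType) (s : seq T) (x : T) (t : seq T) : altb (s ++ x :: x :: t) = false.
Proof.
apply/negP => /altb_cat [_] /=; by rewrite /neqr eqxx.
Qed.

Lemma pw_char (T : eqType) (a : T) (b : T) (s : seq T) : a != b -> all (pred2 a b) s -> altb s ->
  count_mem a s = count_mem b s -> head a s = a -> s = pw a b (count_mem a s).
Proof.
move=> ab; have [n lt] := ubnP (size s); elim: n s lt => // n IH [|x [|y s]] lt //.
- move=> _ _ cnt /= hx; subst x; move: cnt => /=.
  by rewrite eqxx (negbTE ab).
- move=> /= /and3P [xab yab sab] /andP [xy ps] cnt hx; subst x.
  have yb : y = b.
    by move: yab => /orP [/eqP yy|/eqP //]; rewrite yy /neqr eqxx in xy.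
  subst y.
have cnt' : count_mem a s = count_mem b s.
    by move: cnt => /=; rewrite eqxx (negbTE ab) [b == a]eq_sym (negbTE ab) eqxx /=; lia.
  rewrite /= eqxx [b == a]eq_sym (negbTE ab) /= add0n add1n pwS -IH //.
  + by rewrite /= ltnS in lt; apply: ltnW.
  + by case: s ps {lt cnt cnt' sab} => //= z s /andP [].
  + case: s ps sab {lt cnt cnt'} => //= z s /andP [bz _] /andP [/orP [/eqP ->|/eqP zb] _] //.
    by rewrite zb /neqr eqxx in bz.
Qed.

Lemma last_pw (T : eqType) (a : T) (b : T) (c : T) k : last c (pw a b k.+1) = b.
Proof. elim: k c => [|k IH] c //; exact: IH. Qed.

Lemma head_pw2 (T : eqType) (a : T) (b : T) (s : seq T) : a != b -> all (pred2 a b) s -> altb s ->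
  count_mem a s = count_mem b s -> (s != [::] -> last b s = b) -> head a s = a.
Proof.
move=> ab; case: s => [|z s] // sab As cnt hl.
have zab := allP sab z (mem_head _ _).
have [zb|] := eqVneq z b; last by move: zab => /= /orP [/eqP ->|->].
subst z.
have sba : all (pred2 b a) (b :: s) by apply: sub_all sab => t /=; rewrite orbC.
have ba : b != a by rewrite eq_sym.
have E := pw_char ba sba As (esym cnt) (erefl _).
move: (hl isT); rewrite E.
case: (count_mem b (b :: s)) E => [|k] // _; rewrite last_pw => /eqP.
by rewrite (negbTE ab).
Qed.

Lemma altb_sandwich (T : eqType) (a : T) (b : T) (s : seq T) p q : a != b -> all (pred2 a b) s ->
  count_mem a s = count_mem b s -> (s != [::] -> last b s = b) ->
  altb (pw a b p ++ s ++ pw a b q) = altb s.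
Proof.
move=> ab sab cnt hl; apply/idP/idP.
  by move=> /altb_cat [_] /altb_cat [].
move=> As.
have hs := head_pw2 ab sab As cnt hl.
rewrite (pw_char ab sab As cnt hs) -!pwD; exact: altb_pw.
Qed.

Lemma alt_head_last (T : eqType) (a : T) (b : T) (s : seq T) : a != b -> all (pred2 a b) s -> altb s ->
  count_mem a s = count_mem b s -> s != [::] -> last a s != head a s.
Proof.
move=> ab sab As cnt; case: s sab As cnt => [|z s] // sab As cnt _.
have zab := allP sab z (mem_head _ _).
have [zb|za] := eqVneq z b.
  subst z.
  have sba : all (pred2 b a) (b :: s) by apply: sub_all sab => t /=; rewrite orbC.
  have ba : b != a by rewrite eq_sym.
  have E := pw_char ba sba As (esym cnt) (erefl _).
  rewrite E; case: (count_mem b (b :: s)) E => [|k] // _.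
  by rewrite last_pw /=.
have {za}za : z = a by move: zab => /= /orP [/eqP ->|/eqP zb]; rewrite ?zb ?eqxx in za.
subst z.
have E := pw_char ab sab As cnt (erefl _).
rewrite E; case: (count_mem a (a :: s)) E => [|k] // _.
by rewrite last_pw /= eq_sym.
Qed.

Lemma pred2_third (T : eqType) (a : T) (b : T) (x : T) (y : T) (z : T) : pred2 a b x -> pred2 a b y -> pred2 a b z ->
  x != y -> z != y -> x = z.
Proof.
by move=> /orP[/eqP->|/eqP->] /orP[/eqP->|/eqP->] /orP[/eqP->|/eqP->]; rewrite ?eqxx.
Qed.

Lemma altb_junction (T : eqType) (a : T) (b : T) (s1 : seq T) (s2 : seq T) : a != b -> all (pred2 a b) s1 -> all (pred2 a b) s2 ->
  count_mem a s1 = count_mem b s1 -> count_mem a s2 = count_mem b s2 ->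
  s1 != [::] -> s2 != [::] -> altb (s1 ++ s2) -> last a s1 = last a s2.
Proof.
move=> ab s1ab s2ab c1 c2 n1 n2 A.
have [A1 A2] := altb_cat A.
have hl2 := alt_head_last ab s2ab A2 c2 n2.
case: s2 s2ab c2 n2 A A2 hl2 => [|h t] // s2ab c2 _ A A2 hl2.
have j := altb_cat_last A n1.
case: s1 s1ab c1 n1 A A1 j => [|z s1] // s1ab _ _ _ _ j.
have l1ab : pred2 a b (last z s1).
  by apply: (allP s1ab); rewrite mem_last.
have hab := allP s2ab h (mem_head _ _).
have l2ab : pred2 a b (last h t).
  by apply: (allP s2ab); rewrite mem_last.
move: j hl2 => /= j hl2.
exact: (pred2_third l1ab hab l2ab).
Qed.


Lemma altb_map (T T' : eqType) (f : T -> T') (s : seq T) : injective f -> altb (map f s) = altb s.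
Proof.
move=> fi; case: s => [|a s] //=; rewrite path_map; apply: eq_path => x y.
by rewrite /= /neqr inj_eq.
Qed.


Lemma last_undup (T : eqType) (x0 : T) (s : seq T) : last x0 (undup s) = last x0 s.
Proof.
elim: s x0 => [|x s IH] x0 //=.
case: ifP => xs; last by rewrite /= IH.
rewrite IH; case: s xs {IH} => //.
Qed.

Lemma uniq_pred2 (T : eqType) (e : seq T) (x y : T) : uniq e -> x \in e -> y \in e -> x != y ->
  filter (pred2 x y) e = [:: x; y] \/ filter (pred2 x y) e = [:: y; x].
Proof.
elim: e => [|z e IH] //= /andP [ze ue] xe ye xy.
have [zx|zx] := eqVneq z x.
  subst z; have ye' : y \in e by move: ye; rewrite inE eq_sym (negbTE xy).
  left => /=; congr (_ :: _).
  rewrite -(filter_pred1_uniq ue ye'); apply: eq_in_filter => t te /=.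
  by have -> : (t == x) = false by apply/eqP => tx; subst t; rewrite te in ze.
have [zy|zy] := eqVneq z y.
  subst z; have xe' : x \in e by move: xe; rewrite inE (negbTE xy).
  right => /=; congr (_ :: _).
  rewrite -(filter_pred1_uniq ue xe'); apply: eq_in_filter => t te /=.
  have -> : (t == y) = false by apply/eqP => tx; subst t; rewrite te in ze.
  by rewrite orbF.
have xe' : x \in e by move: xe; rewrite inE eq_sym (negbTE zx).
have ye' : y \in e by move: ye; rewrite inE eq_sym (negbTE zy).
exact: IH.
Qed.

Lemma flatten_if1 (A B : Type) (p : pred A) (f : A -> B) (s : seq A) :
  flatten [seq (if p x then [:: f x] else [::]) | x <- s] = map f (filter p s).
Proof. by elim: s => [|x s IH] //=; case: (p x) => /=; rewrite IH. Qed.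

Lemma flatten_ifQ (A B : Type) (p : pred A) (Q : seq B) (s : seq A) :
  flatten [seq (if p x then Q else [::]) | x <- s] = flatten (nseq (count p s) Q).
Proof. by elim: s => [|x s IH] //=; case: (p x) => /=; rewrite IH. Qed.

Lemma filter_pred1_in (T : eqType) (c : seq T) g : uniq c ->
  filter (pred1 g) c = if g \in c then [:: g] else [::].
Proof.
move=> uc; case: ifP => gc; first exact: filter_pred1_uniq.
apply/eqP; rewrite -size_eq0 size_filter; apply/eqP/count_memPn; by rewrite gc.
Qed.

Fixpoint aux (T : Type) (p s : seq T) : seq (seq T) :=
  if s is x :: s' then
    [:: x] :: (if s' is [::] then [::] else (s' ++ p ++ [:: x]) :: aux (rcons p x) s')
  else [::].

Lemma flattenC (T : Type) (a : seq T) l : flatten (a :: l) = a ++ flatten l.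
Proof. by []. Qed.

Lemma auxE (T : Type) (p s : seq T) x y :
  aux p [:: x, y & s] = [:: x] :: ((y :: s) ++ p ++ [:: x]) :: aux (rcons p x) (y :: s).
Proof. by []. Qed.

Lemma aux_flatten (T : Type) (s p : seq T) : 0 < size s ->
  flatten (aux p s) = s ++ flatten (nseq (size s).-1 (p ++ s)).
Proof.
elim: s p => [|x s IH] p // _.
case: s IH => [|y s] IH; first by [].
have -> : flatten (aux p [:: x, y & s]) = [:: x] ++ ((y :: s) ++ p ++ [:: x]) ++ flatten (aux (rcons p x) (y :: s)) by [].
rewrite IH // -!catA /= -!catA /= cat_rcons.
by [].
Qed.

Lemma aux_uniq (T : eqType) (s p : seq T) : uniq (p ++ s) -> forall c, c \in aux p s -> uniq c.
Proof.
elim: s p => [|x s IH] p //= U c; rewrite inE => /orP [/eqP -> //|].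
case: s IH U => [|y s] IH U //; rewrite inE => /orP [/eqP ->|].
  by rewrite uniq_catC -catA.
by apply: IH; rewrite cat_rcons.
Qed.

Lemma aux_split (T : eqType) (s1 s2 p : seq T) (g g' : T) : g' \in s2 ->
  exists c1 c c2, aux p (s1 ++ g :: s2) = c1 ++ [:: g] :: c :: c2 /\ g \in c /\ g' \in c.
Proof.
elim: s1 p => [|x s1 IH] p hg.
  case: s2 hg => [|y s2] // hg.
  exists [::], ((y :: s2) ++ p ++ [:: g]), (aux (rcons p g) (y :: s2)); split => //.
  by split; rewrite !mem_cat ?hg ?mem_seq1 ?eqxx ?orbT.
have [c1 [c [c2 [E H]]]] := IH (rcons p x) hg.
have -> : aux p (x :: s1 ++ g :: s2) =
   [:: x] :: ((s1 ++ g :: s2) ++ p ++ [:: x]) :: aux (rcons p x) (s1 ++ g :: s2).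
  by case: (s1) {E IH}.
rewrite E; by exists ([:: [:: x]; (s1 ++ g :: s2) ++ p ++ [:: x]] ++ c1), c, c2.
Qed.

Definition chunks (T : Type) (e : seq T) := aux [::] e.

Lemma chunks_flatten (T : Type) (e : seq T) : flatten (chunks e) = flatten (nseq (size e) e).
Proof.
case: e => [|x e] //; rewrite /chunks aux_flatten //=.
Qed.


Definition colw {T1 T2 : Type} (c : seq T1) (y : T2) := [seq (x, y) | x <- c].
Definition roww {T1 T2 : Type} (c : seq T2) (x : T1) := [seq (x, y) | y <- c].
Definition Xw {T1 T2 : Type} (eG : seq T1) (v : seq T2) := flatten (map (colw eG) v).
Definition Yw {T1 T2 : Type} (eH : seq T2) (u : seq T1) := flatten (map (roww eH) u).
Definition cm {T1 T2 : Type} (eH : seq T2) (c : seq T1) := flatten [seq colw c y | y <- eH].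
Definition Zw {T1 T2 : Type} (eG : seq T1) (eH : seq T2) := flatten (map (cm eH) (chunks eG)).
Definition Ww {T1 T2 : eqType} (u : seq T1) (v : seq T2) :=
  Xw (undup u) v ++ Yw (undup v) u ++ Zw (undup u) (undup v).

Lemma fcol (T1 T2 : eqType) (c : seq T1) (y : T2) g h g' h' :
  filter (pred2 (g, h) (g', h')) (colw c y) =
  [seq (x, y) | x <- filter (fun x => ((x == g) && (y == h)) || ((x == g') && (y == h'))) c].
Proof. by rewrite filter_map; congr map; apply: eq_filter => x /=; rewrite !xpair_eqE. Qed.

Lemma frow (T1 T2 : eqType) (c : seq T2) (x : T1) g h g' h' :
  filter (pred2 (g, h) (g', h')) (roww c x) =
  [seq (x, y) | y <- filter (fun y => ((x == g) && (y == h)) || ((x == g') && (y == h'))) c].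
Proof. by rewrite filter_map; congr map; apply: eq_filter => y /=; rewrite !xpair_eqE. Qed.

Lemma count_nseq_flatten (T : eqType) (a : pred T) n (s : seq T) :
  count a (flatten (nseq n s)) = n * count a s.
Proof. by elim: n => [|n IH] //=; rewrite count_cat IH mulSn. Qed.

Lemma sumn_if (T : eqType) (s : seq T) h K :
  sumn [seq (if y == h then K else 0) | y <- s] = count_mem h s * K.
Proof. by elim: s => [|y s IH] //=; rewrite IH mulnDl; case: (y == h) => /=; rewrite ?mul1n ?mul0n. Qed.

Lemma count_col (T1 T2 : eqType) (c : seq T1) (y : T2) g h :
  count_mem (g, h) (colw c y) = if y == h then count_mem g c else 0.
Proof.
rewrite count_map; case: eqP => [->|yh].
  by apply: eq_count => x /=; rewrite xpair_eqE eqxx andbT.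
rewrite -(count_pred0 c); apply: eq_count => x /=; rewrite xpair_eqE.
by case: eqP => //= _; apply/eqP.
Qed.

Lemma count_row (T1 T2 : eqType) (c : seq T2) (x : T1) g h :
  count_mem (g, h) (roww c x) = if x == g then count_mem h c else 0.
Proof.
rewrite count_map; case: eqP => [->|xg].
  by apply: eq_count => y /=; rewrite xpair_eqE eqxx.
rewrite -(count_pred0 c); apply: eq_count => y /=; rewrite xpair_eqE.
by case: eqP.
Qed.

Lemma count_X (T1 T2 : eqType) (eG : seq T1) (v : seq T2) g h :
  uniq eG -> g \in eG -> count_mem (g, h) (Xw eG v) = count_mem h v.
Proof.
move=> uG gG; rewrite /Xw count_flatten -map_comp.
rewrite (eq_map (_ : _ =1 fun y => if y == h then 1 else 0)) ?sumn_if ?muln1 //.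
by move=> y /=; rewrite count_col (count_uniq_mem _ uG) gG.
Qed.

Lemma count_Y (T1 T2 : eqType) (eH : seq T2) (u : seq T1) g h :
  uniq eH -> h \in eH -> count_mem (g, h) (Yw eH u) = count_mem g u.
Proof.
move=> uH hH; rewrite /Yw count_flatten -map_comp.
rewrite (eq_map (_ : _ =1 fun x => if x == g then 1 else 0)) ?sumn_if ?muln1 //.
by move=> x /=; rewrite count_row (count_uniq_mem _ uH) hH.
Qed.

Lemma count_cm (T1 T2 : eqType) (eH : seq T2) (c : seq T1) g h :
  uniq eH -> h \in eH -> count_mem (g, h) (cm eH c) = count_mem g c.
Proof.
move=> uH hH; rewrite /cm count_flatten -map_comp.
rewrite (eq_map (_ : _ =1 fun y => if y == h then count_mem g c else 0)) ?sumn_if.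
  by rewrite (count_uniq_mem _ uH) hH mul1n.
by move=> y /=; rewrite count_col.
Qed.

Lemma count_Z (T1 T2 : eqType) (eG : seq T1) (eH : seq T2) g h :
  uniq eG -> g \in eG -> uniq eH -> h \in eH ->
  count_mem (g, h) (Zw eG eH) = size eG.
Proof.
move=> uG gG uH hH; rewrite /Zw count_flatten -map_comp.
rewrite (eq_map (_ : _ =1 fun c => count_mem g c)); last by move=> c /=; rewrite count_cm.
rewrite -count_flatten chunks_flatten count_nseq_flatten (count_uniq_mem _ uG) gG muln1 //.
Qed.


Lemma flatten_map_filter (A B : Type) (F : A -> seq B) (p : pred A) (s : seq A) :
  (forall x, ~~ p x -> F x = [::]) -> flatten (map F s) = flatten (map F (filter p s)).
Proof.
move=> H; elim: s => [|x s IH] //=; case: ifP => px /=; rewrite IH //.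
by rewrite H ?px.
Qed.

Lemma fX1 (T1 T2 : eqType) (eG : seq T1) (v : seq T2) g h h' :
  uniq eG -> g \in eG ->
  filter (pred2 (g, h) (g, h')) (Xw eG v) = map (pair g) (filter (pred2 h h') v).
Proof.
move=> uG gG; rewrite /Xw filter_flatten -map_comp -flatten_if1.
congr flatten; apply: eq_map => y /=; rewrite fcol.
case: ifP => hy.
  rewrite (eq_filter (_ : _ =1 pred1 g)) ?filter_pred1_uniq //.
  by move=> x /=; rewrite -andb_orr; move: hy => /= ->; rewrite andbT.
rewrite (eq_filter (_ : _ =1 pred0)) ?filter_pred0 //.
by move=> x /=; rewrite -andb_orr; move: hy => /= ->; rewrite andbF.
Qed.

Lemma fY1 (T1 T2 : eqType) (eH : seq T2) (u : seq T1) g h h' :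
  filter (pred2 (g, h) (g, h')) (Yw eH u) =
  flatten (nseq (count_mem g u) (map (pair g) (filter (pred2 h h') eH))).
Proof.
rewrite /Yw filter_flatten -map_comp -flatten_ifQ.
congr flatten; apply: eq_map => x /=; rewrite frow.
case: eqP => [->|xg].
  by congr map; apply: eq_filter => y /=; rewrite eqxx.
by rewrite (eq_filter (_ : _ =1 pred0)) ?filter_pred0 // => x; rewrite ?andbF.
Qed.

Lemma fcm1 (T1 T2 : eqType) (eH : seq T2) (c : seq T1) g h h' :
  uniq c ->
  filter (pred2 (g, h) (g, h')) (cm eH c) =
  if g \in c then map (pair g) (filter (pred2 h h') eH) else [::].
Proof.
move=> uc; rewrite /cm filter_flatten -map_comp.
rewrite (eq_map (_ : _ =1 fun y => if pred2 h h' y && (g \in c) then [:: (g, y)] else [::])).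
  rewrite flatten_if1; case: ifP => gc.
    by congr map; apply: eq_filter => y; rewrite andbT.
  by rewrite (eq_filter (_ : _ =1 pred0)) ?filter_pred0 // => y; rewrite andbF.
move=> y /=; rewrite fcol.
case hy: (pred2 h h' y).
  rewrite (eq_filter (_ : _ =1 pred1 g)) ?filter_pred1_in //.
    by move: hy => /= -> /=; case: (g \in c).
  by move=> x /=; rewrite -andb_orr; move: hy => /= ->; rewrite andbT.
rewrite (eq_filter (_ : _ =1 pred0)) ?filter_pred0; first by move: hy => /= ->.
by move=> x /=; rewrite -andb_orr; move: hy => /= ->; rewrite andbF.
Qed.

Lemma fZ1 (T1 T2 : eqType) (eG : seq T1) (eH : seq T2) g h h' :
  uniq eG ->
  exists r, filter (pred2 (g, h) (g, h')) (Zw eG eH) =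
    flatten (nseq r (map (pair g) (filter (pred2 h h') eH))).
Proof.
move=> uG; rewrite /Zw filter_flatten -map_comp.
exists (count (fun c => g \in c) (chunks eG)); rewrite -flatten_ifQ.
congr flatten; apply/eq_in_map => c cin /=.
apply: fcm1; apply: (aux_uniq _ cin); by rewrite cat0s.
Qed.

Lemma fX2 (T1 T2 : eqType) (eG : seq T1) (v : seq T2) g g' h :
  filter (pred2 (g, h) (g', h)) (Xw eG v) =
  flatten (nseq (count_mem h v) (map (fun x => (x, h)) (filter (pred2 g g') eG))).
Proof.
rewrite /Xw filter_flatten -map_comp -flatten_ifQ.
congr flatten; apply: eq_map => y /=; rewrite fcol.
case: eqP => [->|yh].
  by congr map; apply: eq_filter => x /=; rewrite ?eqxx ?andbT.
by rewrite (eq_filter (_ : _ =1 pred0)) ?filter_pred0 // => x; rewrite !andbF.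
Qed.

Lemma fY2 (T1 T2 : eqType) (eH : seq T2) (u : seq T1) g g' h :
  uniq eH -> h \in eH ->
  filter (pred2 (g, h) (g', h)) (Yw eH u) = map (fun x => (x, h)) (filter (pred2 g g') u).
Proof.
move=> uH hH; rewrite /Yw filter_flatten -map_comp -flatten_if1.
congr flatten; apply: eq_map => x /=; rewrite frow.
case: ifP => gx.
  rewrite (eq_filter (_ : _ =1 pred1 h)) ?filter_pred1_uniq //.
  by move=> y /=; rewrite -andb_orl; move: gx => /= ->.
rewrite (eq_filter (_ : _ =1 pred0)) ?filter_pred0 //.
by move=> y /=; rewrite -andb_orl; move: gx => /= ->.
Qed.

Lemma fcm2 (T1 T2 : eqType) (eH : seq T2) (c : seq T1) g g' h :
  uniq eH -> h \in eH ->
  filter (pred2 (g, h) (g', h)) (cm eH c) = map (fun x => (x, h)) (filter (pred2 g g') c).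
Proof.
move=> uH hH; rewrite /cm filter_flatten -map_comp.
rewrite (eq_map (_ : _ =1 fun y => if y == h then
     map (fun x => (x, h)) (filter (pred2 g g') c) else [::])).
  by rewrite flatten_ifQ (count_uniq_mem _ uH) hH /= cats0.
move=> y /=; rewrite fcol.
case: eqP => [->|yh].
  by congr map; apply: eq_filter => x /=; rewrite ?eqxx ?andbT.
by rewrite (eq_filter (_ : _ =1 pred0)) ?filter_pred0 // => x; rewrite ?andbF.
Qed.

Lemma fZ2 (T1 T2 : eqType) (eG : seq T1) (eH : seq T2) g g' h :
  uniq eH -> h \in eH ->
  filter (pred2 (g, h) (g', h)) (Zw eG eH) =
  flatten (nseq (size eG) (map (fun x => (x, h)) (filter (pred2 g g') eG))).
Proof.
move=> uH hH; rewrite /Zw filter_flatten -map_comp.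
rewrite (eq_map (_ : _ =1 fun c => map (fun x => (x, h)) (filter (pred2 g g') c))); last first.
  by move=> c /=; rewrite fcm2.
rewrite map_comp -map_flatten -filter_flatten chunks_flatten filter_flatten map_nseq.
by rewrite map_flatten map_nseq.
Qed.


Lemma filter_pred2C (T : eqType) (a b : T) (s : seq T) :
  filter (pred2 a b) s = filter (pred2 b a) s.
Proof. by apply: eq_filter => x /=; rewrite orbC. Qed.

Lemma count_filter2 (T : eqType) (a b : T) (s : seq T) :
  count_mem a (filter (pred2 a b) s) = count_mem a s.
Proof. by rewrite count_filter; apply: eq_count => x /=; case: eqP. Qed.

Lemma count_filter2r (T : eqType) (a b : T) (s : seq T) :
  count_mem b (filter (pred2 a b) s) = count_mem b s.
Proof. by rewrite filter_pred2C count_filter2. Qed.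

Lemma all_filter2 (T : eqType) (a b : T) (s : seq T) : all (pred2 a b) (filter (pred2 a b) s).
Proof. by apply/allP => x; rewrite mem_filter => /andP []. Qed.

Lemma last_default (T : Type) (x y : T) s : 0 < size s -> last x s = last y s.
Proof. by case: s. Qed.

Lemma last_filter_undup (T : eqType) (x : T) (p : pred T) s :
  last x (filter p s) = last x (filter p (undup s)).
Proof. by rewrite filter_undup last_undup. Qed.

Lemma fX3 (T1 T2 : eqType) (eG : seq T1) (v : seq T2) (g g' : T1) (h h' : T2) :
  uniq eG -> g \in eG -> g' \in eG -> g != g' -> h != h' ->
  filter (pred2 (g, h) (g', h')) (Xw eG v) =
  map (fun y => if y == h then (g, h) else (g', h')) (filter (pred2 h h') v).
Proof.
move=> uG gG g'G gg hh; rewrite /Xw filter_flatten -map_comp -flatten_if1.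
congr flatten; apply: eq_map => y /=; rewrite fcol.
have [->|yh] := eqVneq y h.
  rewrite /= (eq_filter (_ : _ =1 pred1 g)) ?filter_pred1_uniq //.
  by move=> x /=; rewrite ?eqxx ?andbT (negbTE hh) ?andbF ?orbF.
have [->|yh'] := eqVneq y h'.
  rewrite ?orbT /= ?(negbTE hh) (eq_filter (_ : _ =1 pred1 g')) ?filter_pred1_uniq //.
  by move=> x /=; rewrite andbF andbT.
rewrite /=.
by rewrite (eq_filter (_ : _ =1 pred0)) ?filter_pred0 // => x; rewrite !andbF.
Qed.

Lemma fY3 (T1 T2 : eqType) (eH : seq T2) (u : seq T1) (g g' : T1) (h h' : T2) :
  uniq eH -> h \in eH -> h' \in eH -> g != g' -> h != h' ->
  filter (pred2 (g, h) (g', h')) (Yw eH u) =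
  map (fun x => if x == g then (g, h) else (g', h')) (filter (pred2 g g') u).
Proof.
move=> uH hH h'H gg hh; rewrite /Yw filter_flatten -map_comp -flatten_if1.
congr flatten; apply: eq_map => x /=; rewrite frow.
have [->|xg] := eqVneq x g.
  rewrite /= (eq_filter (_ : _ =1 pred1 h)) ?filter_pred1_uniq //.
  by move=> y /=; rewrite (negbTE gg) /= orbF.
have [->|xg'] := eqVneq x g'.
  rewrite ?orbT /= ?(negbTE gg) (eq_filter (_ : _ =1 pred1 h')) ?filter_pred1_uniq //.
rewrite /=.
by rewrite (eq_filter (_ : _ =1 pred0)) ?filter_pred0.
Qed.

Lemma fcm3a (T1 T2 : eqType) (eH : seq T2) (g g' : T1) (h h' : T2) :
  uniq eH -> h \in eH -> g != g' ->
  filter (pred2 (g, h) (g', h')) (cm eH [:: g]) = [:: (g, h)].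
Proof.
move=> uH hH gg; rewrite /cm filter_flatten -map_comp.
rewrite (eq_map (_ : _ =1 fun y => if y == h then [:: (g, y)] else [::])).
  by rewrite flatten_if1 filter_pred1_uniq.
move=> y; change (filter (pred2 (g,h) (g',h')) (colw [:: g] y) = (if y == h then [:: (g, y)] else [::])).
rewrite fcol /= eqxx (negbTE gg) /= orbF.
by case: (y == h).
Qed.

Lemma fcm3b (T1 T2 : eqType) (eH : seq T2) (c : seq T1) (g g' : T1) (h h' : T2) :
  uniq c -> g \in c -> h != h' -> filter (pred2 h h') eH = [:: h; h'] ->
  exists r, filter (pred2 (g, h) (g', h')) (cm eH c) = (g, h) :: r.
Proof.
move=> uc gc hh E; rewrite /cm filter_flatten -map_comp.
rewrite (flatten_map_filter (p := pred2 h h')); last first.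
  move=> y; rewrite /= negb_or => /andP [yh yh'].
  rewrite fcol (eq_filter (_ : _ =1 pred0)) ?filter_pred0 // => x.
  by rewrite (negbTE yh) (negbTE yh') !andbF.
rewrite E /= fcol.
rewrite (eq_filter (_ : _ =1 pred1 g)) ?filter_pred1_uniq //=; first by eexists.
by move=> x /=; rewrite ?eqxx ?andbT (negbTE hh) ?andbF ?orbF.
Qed.

Lemma split_before (T : eqType) (e : seq T) g g' : g != g' ->
  filter (pred2 g g') e = [:: g; g'] -> exists s1 s2, e = s1 ++ g :: s2 /\ g' \in s2.
Proof.
move=> gg E.
have : g \in filter (pred2 g g') e by rewrite E mem_head.
rewrite mem_filter => /andP [_ ge]; move: E.
case/splitPr: ge => s1 s2; rewrite filter_cat /= eqxx /=.
case: (filter (pred2 g g') s1) => [|z [|w t]] /=.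
- case=> E; exists s1, s2; split => //.
  have : g' \in filter (pred2 g g') s2 by rewrite E mem_head.
  by rewrite mem_filter => /andP [].
- by case=> _ ge; rewrite ge eqxx in gg.
- by case=> _ _; case: t.
Qed.


Lemma type1 (T1 T2 : eqType) (u : seq T1) (v : seq T2) k2 (g : T1) (h h' : T2) :
  g \in u -> count_mem h v = k2 -> count_mem h' v = k2 -> h != h' ->
  filter (pred2 h h') (undup v) = [:: h; h'] ->
  altb (filter (pred2 (g, h) (g, h')) (Ww u v)) = altb (filter (pred2 h h') v).
Proof.
move=> gu ch ch' hh E.
have uG : uniq (undup u) := undup_uniq u.
have gG : g \in undup u by rewrite mem_undup.
rewrite /Ww !filter_cat fY1.
have [r ->] := fZ1 (undup v) g h h' uG.
rewrite E /=.
set s := filter _ (Xw _ _).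
have pq : (g, h) != (g, h') by rewrite xpair_eqE eqxx (negbTE hh).
have := @altb_sandwich _ (g, h) (g, h') s 0 (count_mem g u + r) pq (all_filter2 _ _ _).
rewrite pwD /= => -> //.
- by rewrite /s fX1 // altb_map // => a b [].
- by rewrite /s count_filter2 count_filter2r !count_X // ch ch'.
- move=> _; rewrite /s fX1 // last_map last_filter_undup E //.
Qed.

Lemma type2 (T1 T2 : eqType) (u : seq T1) (v : seq T2) k1 (g g' : T1) (h : T2) :
  h \in v -> count_mem g u = k1 -> count_mem g' u = k1 -> g != g' ->
  filter (pred2 g g') (undup u) = [:: g; g'] ->
  altb (filter (pred2 (g, h) (g', h)) (Ww u v)) = altb (filter (pred2 g g') u).
Proof.
move=> hv cg cg' gg E.
have uH : uniq (undup v) := undup_uniq v.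
have hH : h \in undup v by rewrite mem_undup.
rewrite /Ww !filter_cat fX2 fZ2 // E /=.
set s := filter _ (Yw _ _).
have pq : (g, h) != (g', h) by rewrite xpair_eqE eqxx (negbTE gg).
have := @altb_sandwich _ (g, h) (g', h) s (count_mem h v) (size (undup u)) pq (all_filter2 _ _ _).
rewrite /= => -> //.
- by rewrite /s fY2 // altb_map // => a b [].
- by rewrite /s count_filter2 count_filter2r !count_Y // cg cg'.
- move=> _; rewrite /s fY2 // (last_map (fun x => (x, h))) last_filter_undup E //.
Qed.

Lemma type3 (T1 T2 : eqType) (u : seq T1) (v : seq T2) k1 k2 (g g' : T1) (h h' : T2) :
  g \in u -> g' \in u -> h \in v -> h' \in v ->
  count_mem g u = k1 -> count_mem g' u = k1 -> count_mem h v = k2 -> count_mem h' v = k2 ->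
  g != g' -> h != h' ->
  filter (pred2 g g') (undup u) = [:: g; g'] ->
  ~~ altb (filter (pred2 (g, h) (g', h')) (Ww u v)).
Proof.
move=> gu g'u hv h'v cg cg' ch ch' gg hh EG.
have uG : uniq (undup u) := undup_uniq u.
have gG : g \in undup u by rewrite mem_undup.
have g'G : g' \in undup u by rewrite mem_undup.
have uH : uniq (undup v) := undup_uniq v.
have hH : h \in undup v by rewrite mem_undup.
have h'H : h' \in undup v by rewrite mem_undup.
set p := (g, h); set q := (g', h').
have pq : p != q by rewrite xpair_eqE (negbTE gg).
rewrite /Ww !filter_cat.
set Xp := filter _ (Xw _ _); set Yp := filter _ (Yw _ _); set Zp := filter _ (Zw _ _).
apply/negP => A.
have A' : altb (Xp ++ Yp) by move: A; rewrite catA => /altb_cat [].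
have cX : count_mem p Xp = count_mem q Xp.
  by rewrite /Xp count_filter2 count_filter2r !count_X // ch ch'.
have cY : count_mem p Yp = count_mem q Yp.
  by rewrite /Yp count_filter2 count_filter2r !count_Y // cg cg'.
have cpX : count_mem p Xp = count_mem h v by rewrite /Xp count_filter2 count_X.
have cpY : count_mem p Yp = count_mem g u by rewrite /Yp count_filter2 count_Y.
have hv0 : 0 < count_mem h v by rewrite -has_count has_pred1.
have gu0 : 0 < count_mem g u by rewrite -has_count has_pred1.
have nX : Xp != [::] by apply/eqP => X0; move: cpX hv0; rewrite X0 /= => <-.
have nY : Yp != [::] by apply/eqP => Y0; move: cpY gu0; rewrite Y0 /= => <-.
have J := altb_junction pq (all_filter2 _ _ _) (all_filter2 _ _ _) cX cY nX nY A'.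
pose fY := fun x => if x == g then p else q.
have LY : last p Yp = q.
  rewrite (last_default p q) ?lt0n ?size_eq0 // /Yp fY3 //.
  rewrite [X in last X _](_ : q = fY g'); last by rewrite /fY eq_sym (negbTE gg).
  by rewrite last_map last_filter_undup EG /= /fY eq_sym (negbTE gg).
pose fX := fun y => if y == h then p else q.
have EH : filter (pred2 h h') (undup v) = [:: h; h'].
  have [//|EH] := uniq_pred2 uH hH h'H hh.
  move: J; rewrite LY /Xp fX3 //.
  rewrite [X in last X _](_ : p = fX h); last by rewrite /fX eqxx.
  rewrite last_map last_filter_undup EH /fX eqxx => pq'.
  by rewrite pq' eqxx in pq.
have [s1 [s2 [Ee g's2]]] := split_before gg EG.
have [c1 [c [c2 [Ec [gc g'c]]]]] := aux_split s1 [::] g g's2.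
have cin : c \in aux [::] (undup u) by rewrite Ee Ec mem_cat inE inE eqxx !orbT.
have uc : uniq c by apply: (aux_uniq _ cin); rewrite cat0s.
have [r Er] := fcm3b g' uc gc hh EH.
have Ep := fcm3a h' uH hH gg.
move: A; rewrite /Zp /Zw /chunks Ee Ec map_cat flatten_cat filter_cat /=.
rewrite !filter_cat Ep Er => A.
have : altb ((Xp ++ Yp ++ filter (pred2 p q) (flatten [seq cm (undup v) i | i <- c1])) ++
   p :: p :: (r ++ filter (pred2 p q) (flatten [seq cm (undup v) i | i <- c2]))).
  by move: A; rewrite -!catA.
by rewrite altb_dup.
Qed.


Lemma main_rep (T1 T2 : finType) (E1 : rel T1) (E2 : rel T2) k1 k2 (u : seq T1) (v : seq T2) :
  uniform k1 u -> represents E1 u -> uniform k2 v -> represents E2 v ->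
  k_representable (cart_rel E1 E2) (k1 + k2 + #|T1|).
Proof.
move=> Uu [inu Ru] Uv [inv Rv]; exists (Ww u v).
have uG := undup_uniq u; have uH := undup_uniq v.
have sizeG : size (undup u) = #|T1|.
  rewrite cardE; apply: perm_size; apply: uniq_perm => //; first exact: enum_uniq.
  by move=> x; rewrite mem_undup mem_enum inu.
have cnt : forall x, count_mem x (Ww u v) = k1 + k2 + #|T1|.
  case=> g h; rewrite /Ww !count_cat count_X ?mem_undup // count_Y ?mem_undup //.
  rewrite count_Z ?mem_undup // Uu // Uv // sizeG; lia.
split; first by move=> x _; exact: cnt.
split.
  move=> x; rewrite -has_pred1 has_count cnt.
  have : x.1 \in undup u by rewrite mem_undup.
  by rewrite -sizeG; case: (undup u) => //= _ s _; lia.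
case=> g h [g' h'] pq; rewrite (alternateE _ pq) /cart_rel /=.
have gu := inu g; have g'u := inu g'; have hv := inv h; have h'v := inv h'.
have gG : g \in undup u by rewrite mem_undup.
have g'G : g' \in undup u by rewrite mem_undup.
have hH : h \in undup v by rewrite mem_undup.
have h'H : h' \in undup v by rewrite mem_undup.
have [eg|gg] := eqVneq g g'.
  subst g'.
  have hh : h != h' by move: pq; rewrite xpair_eqE eqxx.
  rewrite (negbTE hh) /= orbF (Rv h h' hh) (alternateE _ hh).
  have [E|E] := uniq_pred2 uH hH h'H hh.
    by rewrite (type1 gu (Uv h hv) (Uv h' h'v) hh E).
  have hh' : h' != h by rewrite eq_sym.
  rewrite (filter_pred2C (g, h)) (filter_pred2C h).
  rewrite (filter_pred2C h) in E.
  by rewrite (type1 gu (Uv h' h'v) (Uv h hv) hh' E).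
have [eh|hh] := eqVneq h h'.
  subst h'.
  rewrite /= (Ru g g' gg) (alternateE _ gg).
  have [E|E] := uniq_pred2 uG gG g'G gg.
    by rewrite (type2 hv (Uu g gu) (Uu g' g'u) gg E).
  have gg' : g' != g by rewrite eq_sym.
  rewrite (filter_pred2C (g, h)) (filter_pred2C g).
  rewrite (filter_pred2C g) in E.
  by rewrite (type2 hv (Uu g' g'u) (Uu g gu) gg' E).
rewrite /=; split => // A.
have [E|E] := uniq_pred2 uG gG g'G gg.
  by move: A; rewrite (negbTE (type3 gu g'u hv h'v (Uu g gu) (Uu g' g'u) (Uv h hv) (Uv h' h'v) gg hh E)).
have gg' : g' != g by rewrite eq_sym.
have hh' : h' != h by rewrite eq_sym.
rewrite (filter_pred2C g) in E.
move: A; rewrite (filter_pred2C (g, h)).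
by rewrite (negbTE (type3 g'u gu h'v hv (Uu g' g'u) (Uu g gu) (Uv h' h'v) (Uv h hv) gg' hh' E)).
Qed.


Lemma swap_rep (T1 T2 : finType) (E1 : rel T1) (E2 : rel T2) k :
  k_representable (cart_rel E2 E1) k -> k_representable (cart_rel E1 E2) k.
Proof.
move=> [W [UW [inW RW]]].
pose f := fun p : T2 * T1 => (p.2, p.1).
pose f' := fun p : T1 * T2 => (p.2, p.1).
have fK : forall x, f (f' x) = x by case.
have f'K : forall x, f' (f x) = x by case.
have fi : injective f := can_inj f'K.
have cm : forall x, count_mem x (map f W) = count_mem (f' x) W.
  move=> x; rewrite count_map; apply: eq_count => y /=.
  by rewrite -{1}(fK x) (inj_eq fi).
have mm : forall x, (x \in map f W) = (f' x \in W).
  by move=> x; rewrite -{1}(fK x) (mem_map fi).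
exists (map f W); split; first by move=> x; rewrite mm cm => /UW.
split; first by move=> x; rewrite mm.
move=> x y xy.
have xy' : f' x != f' y by rewrite (inj_eq (can_inj fK)).
rewrite (alternateE _ xy) filter_map altb_map //.
rewrite (eq_filter (a2 := pred2 (f' x) (f' y))); last first.
  by move=> z /=; rewrite -(fK x) -(fK y) !(inj_eq fi) !f'K.
rewrite -(alternateE _ xy') -RW //.
by case: x y {xy xy'} => [a b] [c d]; rewrite /cart_rel /= orbC.
Qed.

Theorem mainTheorem8 (T1 T2 : finType) (E1 : rel T1) (E2 : rel T2) (k1 k2 : nat) :
  symmetric E1 -> irreflexive E1 -> symmetric E2 -> irreflexive E2 ->
  word_representable E1 -> word_representable E2 ->
  representation_number E1 k1 -> representation_number E2 k2 ->
  k_representable (cart_rel E1 E2) (k1 + k2 + minn #|T1| #|T2|).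
Proof.
move=> _ _ _ _ _ _ [[u [Uu Ru]] _] [[v [Uv Rv]] _].
case: (leqP #|T1| #|T2|) => H.
  exact: main_rep Uu Ru Uv Rv.
have -> : k1 + k2 + #|T2| = k2 + k1 + #|T2| by lia.
apply: swap_rep; exact: main_rep Uv Rv Uu Ru.
Qed.
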